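(* Let $X$ be an object of the category $\mathbf{Rng}$ of not necessarily unital (associative) rings. Then $X$ is unitary (has a multiplicative identity) if and only if $X$ is proto-complete, if and only if $X$ is complete, if and only if $X$ is complete${}^*$, if and only if $X$ is strong-complete (in $\mathbf{Rng}$).
   Context: In a pointed category: a normal monomorphism is a kernel of some morphism; a protosplit monomorphism is a kernel of a split epimorphism; a monomorphism $m:S\to Y$ is Bourn-normal if there is an equivalence relation $(R,r_1,r_2)$ on $Y$ and $\tilde m:S\times S\to R$ with $r_1\tilde m=m\pi_1$, $r_2\tilde m=m\pi_2$ and the square $r_1\tilde m=m\pi_1$ a pullback. An object $X$ is proto-complete if every protosplit monomorphism with domain $X$ is a split monomorphism; complete if every normal monomorphism with domain $X$ is a split monomorphism; complete${}^*$ if every Bourn-normal monomorphism with domain $X$ is a split monomorphism; strong-complete if every protosplit monomorphism with domain $X$ is a split monomorphism with a unique retraction. Morphisms in $\mathbf{Rng}$ are ring homomorphisms not required to preserve identities. *)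

(* Defs.v *)
(* Morphisms are represented as
   functions together with the predicate [is_hom]; equality of morphisms
   is pointwise equality [feq]. *)
Set Implicit Arguments.
Unset Strict Implicit.

Record rng := Rng {
  car :> Type;
  rzero : car;
  radd : car -> car -> car;
  ropp : car -> car;
  rmul : car -> car -> car;
  raddA : forall x y z, radd x (radd y z) = radd (radd x y) z;
  raddC : forall x y, radd x y = radd y x;
  radd0 : forall x, radd rzero x = x;
  raddN : forall x, radd (ropp x) x = rzero;
  rmulA : forall x y z, rmul x (rmul y z) = rmul (rmul x y) z;
  rmulDl : forall x y z, rmul (radd x y) z = radd (rmul x z) (rmul y z);
  rmulDr : forall x y z, rmul x (radd y z) = radd (rmul x y) (rmul x z)
}.

Arguments rzero {r}.

Definition is_hom (X Y : rng) (f : X -> Y) : Prop :=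
  (forall x y, f (radd x y) = radd (f x) (f y)) /\
  (forall x y, f (rmul x y) = rmul (f x) (f y)).

Definition feq (A B : Type) (f g : A -> B) : Prop := forall x, f x = g x.

Definition comp (A B C : Type) (g : B -> C) (f : A -> B) : A -> C :=
  fun x => g (f x).

Section Prod.
Variables A B : rng.
Definition pzero : A * B := (rzero, rzero).
Definition padd (p q : A * B) : A * B := (radd (fst p) (fst q), radd (snd p) (snd q)).
Definition popp (p : A * B) : A * B := (ropp (fst p), ropp (snd p)).
Definition pmul (p q : A * B) : A * B := (rmul (fst p) (fst q), rmul (snd p) (snd q)).
Lemma paddA x y z : padd x (padd y z) = padd (padd x y) z.
Proof. unfold padd; simpl; now rewrite !raddA. Qed.
Lemma paddC x y : padd x y = padd y x.
Proof. unfold padd; now rewrite (raddC (fst x)), (raddC (snd x)). Qed.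
Lemma padd0 x : padd pzero x = x.
Proof. unfold padd, pzero; simpl; rewrite !radd0; now destruct x. Qed.
Lemma paddN x : padd (popp x) x = pzero.
Proof. unfold padd, popp, pzero; simpl; now rewrite !raddN. Qed.
Lemma pmulA x y z : pmul x (pmul y z) = pmul (pmul x y) z.
Proof. unfold pmul; simpl; now rewrite !rmulA. Qed.
Lemma pmulDl x y z : pmul (padd x y) z = padd (pmul x z) (pmul y z).
Proof. unfold pmul, padd; simpl; now rewrite !rmulDl. Qed.
Lemma pmulDr x y z : pmul x (padd y z) = padd (pmul x y) (pmul x z).
Proof. unfold pmul, padd; simpl; now rewrite !rmulDr. Qed.
Definition prod_rng : rng :=
  @Rng (A * B)%type pzero padd popp pmul paddA paddC padd0 paddN
       pmulA pmulDl pmulDr.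
Definition pi1 : prod_rng -> A := fun p => fst p.
Definition pi2 : prod_rng -> B := fun p => snd p.
End Prod.

Definition unitary (X : rng) : Prop :=
  exists e : X, forall x : X, rmul e x = x /\ rmul x e = x.

Definition mono (S Y : rng) (m : S -> Y) : Prop :=
  is_hom m /\
  forall (W : rng) (g h : W -> S), is_hom g -> is_hom h ->
    feq (comp m g) (comp m h) -> feq g h.

(* m is a kernel of f (Rng is pointed; zero morphism = constant 0). *)
Definition is_kernel (S Y Z : rng) (m : S -> Y) (f : Y -> Z) : Prop :=
  is_hom m /\ is_hom f /\ (forall s, f (m s) = rzero) /\
  forall (W : rng) (g : W -> Y), is_hom g -> (forall w, f (g w) = rzero) ->
    exists h : W -> S, is_hom h /\ feq (comp m h) g /\
      forall h' : W -> S, is_hom h' -> feq (comp m h') g -> feq h' h.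

Definition normal_mono (S Y : rng) (m : S -> Y) : Prop :=
  exists (Z : rng) (f : Y -> Z), is_kernel m f.

Definition split_epi (Y B : rng) (p : Y -> B) : Prop :=
  is_hom p /\ exists s : B -> Y, is_hom s /\ feq (comp p s) (fun b => b).

Definition protosplit_mono (S Y : rng) (m : S -> Y) : Prop :=
  exists (B : rng) (p : Y -> B), split_epi p /\ is_kernel m p.

Definition split_mono (S Y : rng) (m : S -> Y) : Prop :=
  is_hom m /\ exists r : Y -> S, is_hom r /\ feq (comp r m) (fun s => s).

(* Internal equivalence relation (R, r1, r2) on Y, stated with
   generalized elements. *)
Definition equiv_rel (Y R : rng) (r1 r2 : R -> Y) : Prop :=
  is_hom r1 /\ is_hom r2 /\
  (forall (W : rng) (g h : W -> R), is_hom g -> is_hom h ->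
     feq (comp r1 g) (comp r1 h) -> feq (comp r2 g) (comp r2 h) -> feq g h) /\
  (exists d : Y -> R, is_hom d /\ feq (comp r1 d) (fun y => y) /\
                       feq (comp r2 d) (fun y => y)) /\
  (exists s : R -> R, is_hom s /\ feq (comp r1 s) r2 /\ feq (comp r2 s) r1) /\
  (forall (W : rng) (a b : W -> R), is_hom a -> is_hom b ->
     feq (comp r2 a) (comp r1 b) ->
     exists t : W -> R, is_hom t /\ feq (comp r1 t) (comp r1 a) /\
                         feq (comp r2 t) (comp r2 b)).

Definition bourn_normal (S Y : rng) (m : S -> Y) : Prop :=
  mono m /\
  exists (R : rng) (r1 r2 : R -> Y) (mt : prod_rng S S -> R),
    equiv_rel r1 r2 /\ is_hom mt /\
    feq (comp r1 mt) (comp m (@pi1 S S)) /\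
    feq (comp r2 mt) (comp m (@pi2 S S)) /\
    (* the square r1 mt = m pi1 is a pullback *)
    (forall (W : rng) (a : W -> R) (b : W -> S), is_hom a -> is_hom b ->
       feq (comp r1 a) (comp m b) ->
       exists h : W -> prod_rng S S, is_hom h /\ feq (comp mt h) a /\
         feq (comp (@pi1 S S) h) b /\
         forall h' : W -> prod_rng S S, is_hom h' -> feq (comp mt h') a ->
           feq (comp (@pi1 S S) h') b -> feq h' h).

Definition proto_complete (X : rng) : Prop :=
  forall (Y : rng) (m : X -> Y), protosplit_mono m -> split_mono m.

Definition complete (X : rng) : Prop :=
  forall (Y : rng) (m : X -> Y), normal_mono m -> split_mono m.

Definition complete_star (X : rng) : Prop :=
  forall (Y : rng) (m : X -> Y), bourn_normal m -> split_mono m.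

Definition strong_complete (X : rng) : Prop :=
  forall (Y : rng) (m : X -> Y), protosplit_mono m ->
    is_hom m /\
    exists r : Y -> X, is_hom r /\ feq (comp r m) (fun x => x) /\
      forall r' : Y -> X, is_hom r' -> feq (comp r' m) (fun x => x) -> feq r' r.

(* Main.v *)
Require Import Defs.
From Stdlib Require Import ZArith Lia ProofIrrelevance ClassicalEpsilon.

Lemma addr0 {A : rng} (x : A) : radd x rzero = x.
Proof. rewrite raddC; apply radd0. Qed.
Lemma addrN {A : rng} (x : A) : radd x (ropp x) = rzero.
Proof. rewrite raddC; apply raddN. Qed.
Lemma addCA {A : rng} (a b c : A) : radd a (radd b c) = radd b (radd a c).
Proof. rewrite !raddA, (raddC a b); reflexivity. Qed.
Lemma addKl {A : rng} (a b c : A) : radd a b = radd a c -> b = c.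
Proof. intros H. rewrite <- (radd0 b), <- (radd0 c), <- (raddN a), <- !raddA, H; reflexivity. Qed.
Lemma addr0_eq {A : rng} (a b : A) : radd a b = a -> b = rzero.
Proof. intros H. apply (addKl a). rewrite addr0. exact H. Qed.
Lemma opp_uniq {A : rng} (a b : A) : radd a b = rzero -> b = ropp a.
Proof. intros H. apply (addKl a). rewrite H, addrN; reflexivity. Qed.
Lemma oppK {A : rng} (a : A) : ropp (ropp a) = a.
Proof. symmetry; apply opp_uniq. apply raddN. Qed.
Lemma opp0 {A : rng} : ropp (@rzero A) = rzero.
Proof. symmetry; apply opp_uniq, radd0. Qed.
Lemma oppD {A : rng} (a b : A) : ropp (radd a b) = radd (ropp a) (ropp b).
Proof. symmetry; apply opp_uniq.
  rewrite <- raddA, (addCA b), addrN, addr0, addrN; reflexivity. Qed.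
Lemma mul0r {A : rng} (x : A) : rmul rzero x = rzero.
Proof. apply (addr0_eq (rmul rzero x)). rewrite <- rmulDl, radd0; reflexivity. Qed.
Lemma mulr0 {A : rng} (x : A) : rmul x rzero = rzero.
Proof. apply (addr0_eq (rmul x rzero)). rewrite <- rmulDr, radd0; reflexivity. Qed.
Lemma mulNr {A : rng} (x y : A) : rmul (ropp x) y = ropp (rmul x y).
Proof. apply opp_uniq. rewrite <- rmulDl, addrN, mul0r; reflexivity. Qed.
Lemma mulrN {A : rng} (x y : A) : rmul x (ropp y) = ropp (rmul x y).
Proof. apply opp_uniq. rewrite <- rmulDr, addrN, mulr0; reflexivity. Qed.

Definition additive {A B : rng} (f : A -> B) := forall x y, f (radd x y) = radd (f x) (f y).
Lemma add_f0 {A B : rng} (f : A -> B) : additive f -> f rzero = rzero.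
Proof. intros H. apply (addr0_eq (f rzero)). rewrite <- H, radd0; reflexivity. Qed.
Lemma add_fN {A B : rng} (f : A -> B) x : additive f -> f (ropp x) = ropp (f x).
Proof. intros H. apply opp_uniq. rewrite <- H, addrN. apply add_f0; auto. Qed.

Ltac pf a r :=
  lazymatch r with
  | radd a ?c => constr:(@eq_refl _ r)
  | radd ?b a => constr:(raddC b a)
  | radd ?b ?c => let p := pf a c in
      lazymatch type of p with _ = radd a ?c' =>
        constr:(eq_trans (f_equal (radd b) p) (addCA b a c')) end
  end.
Ltac ac_loop :=
  first [ reflexivity
        | lazymatch goal with |- radd ?a ?l = ?r =>
            let p := pf a r in
            lazymatch type of p with _ = radd a ?r' =>
              refine (eq_trans _ (eq_sym p)); apply (f_equal (radd a)); ac_loop end end ].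
Ltac ac := repeat rewrite <- raddA; ac_loop.

Lemma test {A : rng} (a b c d : A) : radd (radd a b) (radd c d) = radd d (radd (radd c a) b).
Proof. ac. Qed.

Fixpoint nmul {A : rng} (n : nat) (x : A) : A :=
  match n with O => rzero | S n => radd x (nmul n x) end.
Definition zmul {A : rng} (z : Z) (x : A) : A :=
  match z with Z0 => rzero | Zpos p => nmul (Pos.to_nat p) x
  | Zneg p => ropp (nmul (Pos.to_nat p) x) end.

Lemma nmul_add {A : rng} a b (x : A) : nmul (a + b) x = radd (nmul a x) (nmul b x).
Proof. induction a; simpl. rewrite radd0; auto. rewrite IHa, raddA; auto. Qed.

Lemma zmul_nat {A : rng} n (x : A) : zmul (Z.of_nat n) x = nmul n x.
Proof. destruct n. reflexivity. simpl. rewrite SuccNat2Pos.id_succ. reflexivity. Qed.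

Lemma zmulN {A : rng} n (x : A) : zmul (- n) x = ropp (zmul n x).
Proof. destruct n; simpl. symmetry; apply opp0. reflexivity. rewrite oppK; auto. Qed.

Lemma zmulK {A : rng} a b (x : A) :
  zmul (Z.of_nat a - Z.of_nat b) x = radd (nmul a x) (ropp (nmul b x)).
Proof.
  destruct (Nat.le_gt_cases b a) as [H|H].
  - replace (Z.of_nat a - Z.of_nat b)%Z with (Z.of_nat (a - b)) by lia.
    replace a with (b + (a - b))%nat at 2 by lia.
    rewrite zmul_nat, nmul_add, (raddC (nmul b x)), <- raddA, addrN, addr0; auto.
  - replace (Z.of_nat a - Z.of_nat b)%Z with (- Z.of_nat (b - a))%Z by lia.
    replace b with (a + (b - a))%nat at 2 by lia.
    rewrite zmulN, zmul_nat, nmul_add, oppD, raddA, addrN, radd0; auto.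
Qed.

Lemma Zsplit n : n = (Z.of_nat (Z.to_nat n) - Z.of_nat (Z.to_nat (- n)))%Z.
Proof. lia. Qed.

Lemma zmulD {A : rng} n m (x : A) : zmul (n + m) x = radd (zmul n x) (zmul m x).
Proof.
  rewrite (Zsplit n), (Zsplit m).
  set (a := Z.to_nat n). set (b := Z.to_nat (-n)). set (c := Z.to_nat m). set (d := Z.to_nat (-m)).
  replace (Z.of_nat a - Z.of_nat b + (Z.of_nat c - Z.of_nat d))%Z
    with (Z.of_nat (a + c) - Z.of_nat (b + d))%Z by lia.
  rewrite !zmulK, !nmul_add, oppD. ac.
Qed.

Lemma zmul_hom {A B : rng} (f : A -> B) n x : additive f -> f (zmul n x) = zmul n (f x).
Proof.
  intros Hf.
  assert (H : forall k, f (nmul k x) = nmul k (f x)).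
  { induction k; simpl. apply add_f0; auto. rewrite Hf, IHk; auto. }
  destruct n; simpl. apply add_f0; auto. apply H. rewrite add_fN, H; auto.
Qed.

Lemma zmul0 {A : rng} (x : A) : zmul 0 x = rzero.
Proof. reflexivity. Qed.
Lemma zmul1 {A : rng} (x : A) : zmul 1 x = x.
Proof. simpl. apply addr0. Qed.

Lemma zmul_r0 {A : rng} n : zmul n (@rzero A) = rzero.
Proof.
  assert (H : forall k, nmul k (@rzero A) = rzero).
  { induction k; simpl; auto. rewrite IHk; apply radd0. }
  destruct n; simpl; rewrite ?H; auto using opp0.
Qed.

Lemma zmul_addr {A : rng} n (x y : A) : zmul n (radd x y) = radd (zmul n x) (zmul n y).
Proof.
  assert (H : forall k, nmul k (radd x y) = radd (nmul k x) (nmul k y)).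
  { induction k; simpl. symmetry; apply radd0. rewrite IHk. ac. }
  destruct n; simpl; rewrite ?H, ?oppD; auto. symmetry; apply radd0.
Qed.

Lemma mul_zmul_l {A : rng} n (x y : A) : rmul (zmul n x) y = zmul n (rmul x y).
Proof. apply (zmul_hom (fun z => rmul z y)). intros a b; apply rmulDl. Qed.
Lemma mul_zmul_r {A : rng} n (x y : A) : rmul x (zmul n y) = zmul n (rmul x y).
Proof. apply (zmul_hom (fun z => rmul x z)). intros a b; apply rmulDr. Qed.

Lemma zmulM {A : rng} n m (x : A) : zmul (n * m) x = zmul n (zmul m x).
Proof.
  assert (H : forall a, zmul (Z.of_nat a * m) x = nmul a (zmul m x)).
  { induction a. reflexivity.
    rewrite Nat2Z.inj_succ, Z.mul_succ_l, zmulD, IHa. simpl. apply raddC. }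
  rewrite (Zsplit n) at 1 2.
  rewrite Z.mul_sub_distr_r, <- Z.add_opp_r, zmulD, zmulN, !H, zmulK. reflexivity.
Qed.

Lemma zmulC {A : rng} n m (x : A) : zmul n (zmul m x) = zmul m (zmul n x).
Proof. rewrite <- !zmulM, Z.mul_comm; auto. Qed.

Definition dzero (A : rng) : A * Z := (rzero, 0%Z).
Definition dadd {A : rng} (p q : A * Z) : A * Z := (radd (fst p) (fst q), (snd p + snd q)%Z).
Definition dopp {A : rng} (p : A * Z) : A * Z := (ropp (fst p), (- snd p)%Z).
Definition dmul {A : rng} (p q : A * Z) : A * Z :=
  (radd (rmul (fst p) (fst q)) (radd (zmul (snd p) (fst q)) (zmul (snd q) (fst p))),
   (snd p * snd q)%Z).

Lemma daddA {A : rng} (x y z : A * Z) : dadd x (dadd y z) = dadd (dadd x y) z.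
Proof. unfold dadd; simpl; f_equal. apply raddA. lia. Qed.
Lemma daddC {A : rng} (x y : A * Z) : dadd x y = dadd y x.
Proof. unfold dadd; simpl; f_equal. apply raddC. lia. Qed.
Lemma dadd0 {A : rng} (x : A * Z) : dadd (dzero A) x = x.
Proof. destruct x; unfold dadd; simpl; f_equal. apply radd0. Qed.
Lemma daddN {A : rng} (x : A * Z) : dadd (dopp x) x = dzero A.
Proof. destruct x; unfold dadd, dzero; simpl; f_equal. apply raddN. lia. Qed.
Lemma dmulA {A : rng} (x y z : A * Z) : dmul x (dmul y z) = dmul (dmul x y) z.
Proof.
  destruct x as [x n], y as [y k], z as [z l]; unfold dmul; simpl; f_equal; [|lia].
  rewrite ?rmulDl, ?rmulDr, ?zmul_addr, ?mul_zmul_l, ?mul_zmul_r, ?zmulM, ?rmulA.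
  rewrite (zmulC l n y), (zmulC l k x). ac.
Qed.
Lemma dmulDl {A : rng} (x y z : A * Z) : dmul (dadd x y) z = dadd (dmul x z) (dmul y z).
Proof.
  destruct x as [x n], y as [y k], z as [z l]; unfold dmul, dadd; simpl; f_equal; [|lia].
  rewrite ?rmulDl, ?rmulDr, ?zmul_addr, ?zmulD. ac.
Qed.
Lemma dmulDr {A : rng} (x y z : A * Z) : dmul x (dadd y z) = dadd (dmul x y) (dmul x z).
Proof.
  destruct x as [x n], y as [y k], z as [z l]; unfold dmul, dadd; simpl; f_equal; [|lia].
  rewrite ?rmulDl, ?rmulDr, ?zmul_addr, ?zmulD. ac.
Qed.

Definition Dor (A : rng) : rng :=
  @Rng (A * Z)%type (dzero A) dadd dopp dmul daddA daddC dadd0 daddN dmulA dmulDl dmulDr.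

Definition Zrng : rng :=
  @Rng Z 0%Z Z.add Z.opp Z.mul Z.add_assoc Z.add_comm Z.add_0_l Z.add_opp_diag_l
    Z.mul_assoc Z.mul_add_distr_r Z.mul_add_distr_l.

Lemma hom_add {A B : rng} (f : A -> B) : is_hom f -> additive f.
Proof. intros [H _]; exact H. Qed.

Definition kcar {A B : rng} (f : A -> B) := { a : A | f a = rzero }.
Lemma sig_eq {A : Type} (P : A -> Prop) (u v : {a | P a}) : proj1_sig u = proj1_sig v -> u = v.
Proof. destruct u, v; simpl; intros ->. f_equal; apply proof_irrelevance. Qed.

Lemma k0 {A B : rng} {f : A -> B} (Hf : is_hom f) : f rzero = rzero.
Proof. apply add_f0, hom_add, Hf. Qed.
Lemma kadd_p {A B : rng} {f : A -> B} (Hf : is_hom f) (u v : kcar f) :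
  f (radd (proj1_sig u) (proj1_sig v)) = rzero.
Proof. destruct u, v; simpl. rewrite (proj1 Hf), e, e0; apply radd0. Qed.
Lemma kopp_p {A B : rng} {f : A -> B} (Hf : is_hom f) (u : kcar f) :
  f (ropp (proj1_sig u)) = rzero.
Proof. destruct u; simpl. rewrite add_fN, e; [apply opp0|apply hom_add, Hf]. Qed.
Lemma kmul_p {A B : rng} {f : A -> B} (Hf : is_hom f) (u v : kcar f) :
  f (rmul (proj1_sig u) (proj1_sig v)) = rzero.
Proof. destruct u, v; simpl. rewrite (proj2 Hf), e, e0; apply mul0r. Qed.

Definition Ker {A B : rng} {f : A -> B} (Hf : is_hom f) : rng.
Proof.
  refine (@Rng (kcar f) (exist _ rzero (k0 Hf))
     (fun u v => exist _ _ (kadd_p Hf u v))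
     (fun u => exist _ _ (kopp_p Hf u))
     (fun u v => exist _ _ (kmul_p Hf u v)) _ _ _ _ _ _ _);
  intros; apply sig_eq; simpl.
  apply raddA. apply raddC. apply radd0. apply raddN. apply rmulA. apply rmulDl. apply rmulDr.
Defined.

Definition kincl {A B : rng} {f : A -> B} (Hf : is_hom f) : Ker Hf -> A :=
  fun u => proj1_sig u.
Lemma kincl_hom {A B : rng} {f : A -> B} (Hf : is_hom f) : is_hom (kincl Hf).
Proof. split; intros; reflexivity. Qed.
Lemma kincl_ker {A B : rng} {f : A -> B} (Hf : is_hom f) u : f (kincl Hf u) = rzero.
Proof. destruct u; exact e. Qed.
Definition kin {A B : rng} {f : A -> B} (Hf : is_hom f) (a : A) (H : f a = rzero) : Ker Hf :=
  exist _ a H.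

Lemma zero_hom (W A : rng) : is_hom (fun _ : W => @rzero A).
Proof. split; intros. symmetry; apply radd0. symmetry; apply mul0r. Qed.

Definition good {S Y : rng} (m : S -> Y) :=
  is_hom m /\ (forall a b, m a = m b -> a = b) /\
  (forall x y, exists x', m x' = rmul (m x) y) /\
  (forall x y, exists x', m x' = rmul y (m x)).

Lemma inj_of_ker {S Y : rng} (m : S -> Y) : is_hom m ->
  (forall s, m s = rzero -> s = rzero) -> forall a b, m a = m b -> a = b.
Proof.
  intros Hm H a b E.
  assert (m (radd a (ropp b)) = rzero) as E2.
  { rewrite (proj1 Hm), add_fN, E, addrN; auto. apply hom_add, Hm. }
  apply H in E2. apply (addKl (ropp b)). rewrite raddN, raddC. exact E2.
Qed.

Lemma good_retract {S Y : rng} (m : S -> Y) : unitary S -> good m ->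
  is_hom m /\ exists r : Y -> S, is_hom r /\ feq (comp r m) (fun x => x) /\
      forall r' : Y -> S, is_hom r' -> feq (comp r' m) (fun x => x) -> feq r' r.
Proof.
  intros [e He] [Hm [Hinj [Hl Hr]]].
  split; [exact Hm|].
  set (r := fun y => proj1_sig (constructive_indefinite_description _ (Hl e y))).
  assert (Hr1 : forall y, m (r y) = rmul (m e) y).
  { intros y. unfold r. destruct (constructive_indefinite_description _ _); simpl; auto. }
  assert (Hcomm : forall y, rmul (m e) y = rmul y (m e)).
  { intros y. destruct (Hr e y) as [x2 E2].
    rewrite <- Hr1, <- E2.
    transitivity (rmul (m (r y)) (m e)).
    - rewrite <- (proj2 Hm). f_equal. symmetry; apply He.
    - rewrite Hr1, <- rmulA, <- E2, <- (proj2 Hm). f_equal. apply He. }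
  assert (Hmee : rmul (m e) (m e) = m e).
  { rewrite <- (proj2 Hm). f_equal. apply He. }
  exists r. split; [split|split].
  - intros y y'. apply Hinj. rewrite (proj1 Hm), !Hr1. apply rmulDr.
  - intros y y'. apply Hinj. rewrite (proj2 Hm), !Hr1.
    rewrite <- rmulA, (rmulA y), <- Hcomm, <- !rmulA, (rmulA (m e) (m e)), Hmee. reflexivity.
  - intros x. unfold comp. apply Hinj. rewrite Hr1, <- (proj2 Hm). f_equal. apply He.
  - intros r' Hr' Hr'm y.
    rewrite <- (proj2 (He (r' y))).
    rewrite <- (Hr'm e). unfold comp. rewrite <- (proj2 Hr'), <- Hcomm, <- Hr1.
    apply Hr'm.
Qed.

Lemma kernel_good {S Y Z : rng} (m : S -> Y) (f : Y -> Z) : is_kernel m f -> good m.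
Proof.
  intros [Hm [Hf [Hfm Hu]]].
  split; [exact Hm|]. split; [|split].
  - apply inj_of_ker; auto. intros s Hs.
    destruct (Hu (Ker Hm) (comp m (kincl Hm))) as [h [Hh1 [Hh2 Hh3]]].
    + split; intros; unfold comp; [apply (proj1 Hm) | apply (proj2 Hm)].
    + intros w; apply Hfm.
    + pose (w := kin Hm s Hs).
      assert (E1 := Hh3 (kincl Hm) (kincl_hom Hm) (fun _ => eq_refl) w).
      assert (E2 := Hh3 (fun _ => rzero) (zero_hom _ _)).
      rewrite <- E2 in E1. exact E1.
      intros u; unfold comp. rewrite kincl_ker. apply k0; auto.
  - intros x y.
    destruct (Hu (Ker Hf) (kincl Hf) (kincl_hom Hf) (kincl_ker Hf)) as [h [_ [Hh2 _]]].
    assert (P : f (rmul (m x) y) = rzero).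
    { rewrite (proj2 Hf), Hfm. apply mul0r. }
    exists (h (kin Hf _ P)). apply Hh2.
  - intros x y.
    destruct (Hu (Ker Hf) (kincl Hf) (kincl_hom Hf) (kincl_ker Hf)) as [h [_ [Hh2 _]]].
    assert (P : f (rmul y (m x)) = rzero).
    { rewrite (proj2 Hf), Hfm. apply mulr0. }
    exists (h (kin Hf _ P)). apply Hh2.
Qed.

Lemma bourn_good {S Y : rng} (m : S -> Y) : bourn_normal m -> good m.
Proof.
  intros [[Hm Hmono] [R [r1 [r2 [mt [ER [Hmt [Hmt1 [Hmt2 Hpb]]]]]]]]].
  destruct ER as [Hr1 [Hr2 [_ [[d [Hd [Hd1 Hd2]]] [[s [Hs [Hs1 Hs2]]] _]]]]].
  split; [exact Hm|]. split; [|].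
  - apply inj_of_ker; auto. intros z Hz.
    assert (E := Hmono (Ker Hm) (kincl Hm) (fun _ => rzero) (kincl_hom Hm) (zero_hom _ _)).
    apply (E ltac:(intros u; unfold comp; rewrite kincl_ker; symmetry; apply k0; auto)
             (kin Hm z Hz)).
  - destruct (Hpb (Ker Hr1) (kincl Hr1) (fun _ => rzero) (kincl_hom Hr1) (zero_hom _ _))
      as [h [_ [Hh2 _]]].
    { intros u; unfold comp. rewrite kincl_ker. symmetry; apply k0; auto. }
    assert (Key : forall rho (H : r1 rho = rzero), exists x', m x' = r2 rho).
    { intros rho H. exists (snd (h (kin Hr1 rho H))).
      set (w := kin Hr1 rho H). change (comp m (@pi2 S S) (h w) = r2 rho).
      rewrite <- (Hmt2 (h w)). unfold comp. specialize (Hh2 w). unfold comp in Hh2. rewrite Hh2. reflexivity. }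
    assert (Hm0 : m rzero = rzero) by (apply k0; auto).
    unfold feq, comp, pi1, pi2 in *.
    split; intros x y.
    + assert (H : r1 (s (rmul (mt (x, rzero)) (d y))) = rzero).
      { rewrite Hs1, (proj2 Hr2), Hmt2. unfold comp, pi2; simpl. rewrite Hm0. apply mul0r. }
      destruct (Key _ H) as [x' E]. exists x'. rewrite E, Hs2, (proj2 Hr1), Hmt1, Hd1.
      reflexivity.
    + assert (H : r1 (s (rmul (d y) (mt (x, rzero)))) = rzero).
      { rewrite Hs1, (proj2 Hr2), Hmt2. unfold comp, pi2; simpl. rewrite Hm0. apply mulr0. }
      destruct (Key _ H) as [x' E]. exists x'. rewrite E, Hs2, (proj2 Hr1), Hmt1, Hd1.
      reflexivity.
Qed.

Definition dm (X : rng) : X -> Dor X := fun x => (x, 0%Z).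
Definition dp (X : rng) : Dor X -> Zrng := fun q => snd q.
Definition ds (X : rng) : Zrng -> Dor X := fun n => (rzero, n).

Lemma dm_hom (X : rng) : is_hom (dm X).
Proof.
  split; intros x y; unfold dm; simpl; unfold dadd, dmul; simpl; f_equal.
  rewrite radd0, addr0; reflexivity.
Qed.

Lemma dor_kernel (X : rng) : is_kernel (dm X) (dp X).
Proof.
  split; [apply dm_hom|]. split; [split; intros; reflexivity|]. split; [intros; reflexivity|].
  intros W g Hg Hg0.
  exists (fun w => fst (g w)). split; [split|split].
  - intros x y. rewrite (proj1 Hg). reflexivity.
  - intros x y. rewrite (proj2 Hg). simpl. unfold dmul.
    unfold dp in Hg0; simpl in Hg0. rewrite !Hg0. simpl. rewrite radd0, addr0; reflexivity.
  - intros w. unfold comp, dm. specialize (Hg0 w). unfold dp in Hg0.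
    destruct (g w); simpl in *; subst; reflexivity.
  - intros h' _ Hh w. unfold comp, feq in *. rewrite <- Hh. reflexivity.
Qed.

Lemma dor_splitepi (X : rng) : split_epi (dp X).
Proof.
  split; [split; intros; reflexivity|]. exists (ds X). split; [split|].
  - intros x y. unfold ds; simpl; unfold dadd; simpl. rewrite radd0; reflexivity.
  - intros x y. unfold ds; simpl; unfold dmul; simpl. rewrite mul0r, !zmul_r0, !radd0; reflexivity.
  - intros n; reflexivity.
Qed.

Lemma dor_protosplit (X : rng) : protosplit_mono (dm X).
Proof. exists Zrng, (dp X). split; [apply dor_splitepi|apply dor_kernel]. Qed.

Lemma split_unitary (X : rng) : split_mono (dm X) -> unitary X.
Proof.
  intros [_ [r [Hr Hrm]]].
  exists (r (rzero, 1%Z)). intros x. split.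
  - rewrite <- (Hrm x) at 1. unfold comp, dm. rewrite <- (proj2 Hr). simpl. unfold dmul; simpl.
    rewrite mul0r, !addr0, radd0. exact (Hrm x).
  - rewrite <- (Hrm x) at 1. unfold comp, dm. rewrite <- (proj2 Hr). simpl. unfold dmul; simpl.
    rewrite mulr0, !addr0, !radd0. exact (Hrm x).
Qed.

Lemma zmul_prod {A B : rng} n (p : prod_rng A B) :
  zmul n p = (zmul n (fst p), zmul n (snd p)).
Proof.
  rewrite <- (zmul_hom (fun q : prod_rng A B => fst q)), <- (zmul_hom (fun q : prod_rng A B => snd q)).
  destruct (zmul n p); reflexivity. all: intros x y; reflexivity.
Qed.

Definition RR (X : rng) := Dor (prod_rng X X).
Definition rr1 (X : rng) : RR X -> Dor X := fun q => (fst (fst q), snd q).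
Definition rr2 (X : rng) : RR X -> Dor X := fun q => (snd (fst q), snd q).
Definition mmt (X : rng) : prod_rng X X -> RR X := fun p => (p, 0%Z).

Lemma rr1_hom X : is_hom (rr1 X).
Proof.
  split; intros [[a b] n] [[c d] k]; unfold rr1; simpl; unfold dadd, dmul, padd, pmul; simpl;
    rewrite ?zmul_prod; reflexivity.
Qed.
Lemma rr2_hom X : is_hom (rr2 X).
Proof.
  split; intros [[a b] n] [[c d] k]; unfold rr2; simpl; unfold dadd, dmul, padd, pmul; simpl;
    rewrite ?zmul_prod; reflexivity.
Qed.
Lemma mmt_hom X : is_hom (mmt X).
Proof.
  split; intros [a b] [c d]; unfold mmt; simpl; unfold dadd, dmul, padd, pmul; simpl; f_equal.
  unfold pzero, padd, pmul; simpl. rewrite !radd0, !addr0. reflexivity.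
Qed.

Lemma dor_bourn (X : rng) : bourn_normal (dm X).
Proof.
  split.
  { split; [apply dm_hom|]. intros W g h _ _ H w. specialize (H w). unfold comp, dm in H.
    injection H; auto. }
  exists (RR X), (rr1 X), (rr2 X), (mmt X).
  split; [|split; [apply mmt_hom|split; [intros ?; reflexivity|split; [intros ?; reflexivity|]]]].
  - split; [apply rr1_hom|]. split; [apply rr2_hom|]. split; [|split; [|split]].
    + intros W g h _ _ H1 H2 w. specialize (H1 w); specialize (H2 w).
      unfold comp, rr1, rr2 in *. destruct (g w) as [[a b] n], (h w) as [[c d] k]; simpl in *.
      injection H1; injection H2; intros; subst; reflexivity.
    + exists (fun q : Dor X => ((fst q, fst q), snd q) : RR X). split; [|split; intros [x n]; reflexivity].
      split; intros [a n] [b k]; simpl; unfold dadd, dmul, padd, pmul; simpl;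
        rewrite ?zmul_prod; reflexivity.
    + exists (fun q : RR X => ((snd (fst q), fst (fst q)), snd q) : RR X).
      split; [|split; intros [[x y] n]; reflexivity].
      split; intros [[a b] n] [[c d] k]; simpl; unfold dadd, dmul, padd, pmul; simpl;
        rewrite ?zmul_prod; reflexivity.
    + intros W a b Ha Hb H.
      assert (Hn : forall w, snd (b w) = snd (a w)).
      { intros w; specialize (H w); unfold comp, rr1, rr2 in H. injection H; auto. }
      exists (fun w => ((fst (fst (a w)), snd (fst (b w))), snd (a w)) : RR X).
      split; [split|split].
      * intros x y. rewrite (proj1 Ha), (proj1 Hb). reflexivity.
      * intros x y. rewrite (proj2 Ha), (proj2 Hb). simpl. unfold dmul, pmul; simpl.
        rewrite !Hn, !zmul_prod. reflexivity.
      * intros w; reflexivity.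
      * intros w; unfold comp, rr2, rr1; simpl. rewrite Hn. reflexivity.
  - intros W a b Ha Hb H.
    assert (H1 : forall w, fst (fst (a w)) = b w) by (intros w; specialize (H w); injection H; auto).
    assert (H2 : forall w, snd (a w) = 0%Z) by (intros w; specialize (H w); injection H; auto).
    exists (fun w => (b w, snd (fst (a w))) : prod_rng X X).
    split; [split|split; [|split]].
    + intros x y. rewrite (proj1 Ha), (proj1 Hb). reflexivity.
    + intros x y. rewrite (proj2 Ha), (proj2 Hb). simpl. unfold dmul, pmul; simpl.
      rewrite !H2. simpl. rewrite !addr0. reflexivity.
    + intros w. unfold comp, mmt. rewrite <- (H1 w), <- (H2 w). destruct (a w) as [[u v] n]; reflexivity.
    + intros w; reflexivity.
    + intros h' _ Hh1 Hh2 w. unfold feq, comp, mmt, pi1 in *.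
      specialize (Hh1 w); specialize (Hh2 w).
      destruct (h' w) as [u v]. simpl in *. rewrite <- Hh2, <- Hh1. reflexivity.
Qed.

Lemma good_split {S Y : rng} (m : S -> Y) : unitary S -> good m -> split_mono m.
Proof.
  intros Hu Hg. destruct (good_retract m Hu Hg) as [Hm [r [Hr [Hrm _]]]].
  split; [exact Hm|]. exists r; auto.
Qed.

Theorem proposition4p9 (X : rng) :
  (unitary X <-> proto_complete X) /\
  (unitary X <-> complete X) /\
  (unitary X <-> complete_star X) /\
  (unitary X <-> strong_complete X).
Proof.
  split; [|split; [|split]]; split.
  - intros Hu Y m [B [p [_ Hk]]]. apply good_split; auto. exact (kernel_good m p Hk).
  - intros H. apply split_unitary. apply H, dor_protosplit.
  - intros Hu Y m [Z [f Hk]]. apply good_split; auto. exact (kernel_good m f Hk).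
  - intros H. apply split_unitary. apply H. exists Zrng, (dp X). apply dor_kernel.
  - intros Hu Y m Hb. apply good_split; auto. exact (bourn_good m Hb).
  - intros H. apply split_unitary. apply H, dor_bourn.
  - intros Hu Y m [B [p [_ Hk]]]. apply good_retract; auto. exact (kernel_good m p Hk).
  - intros H. apply split_unitary. destruct (H _ _ (dor_protosplit X)) as [Hm [r [Hr [Hrm _]]]].
    split; [exact Hm|]. exists r; auto.
Qed.
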